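(* Let $n\ge1$, $N,M\ge1$. Users have opinions $u_i^t\in[-1,1]^n$ ($i=1,\dots,N$) and creators have opinions $c_j^t\in[-1,1]^n$ ($j=1,\dots,M$). Assume the social adjacency matrix $A$ is diagonal, with $A_{ii}\in(0,1]$, and that creators are fully stubborn, $\Gamma=I_M$, so that $c_j^t=c_j^0=:c_j$ for all $t$. Let the recommender be greedy: at each time $t$, user $i$ consumes the content of creator $j(i,t)\in\arg\min_{j}\|c_j^t-u_i^t\|_2$, and the user opinions evolve as $$u_i^{t+1}=(1-\lambda_i)\big(A_{ii}\,u_i^t+(1-A_{ii})\,c_{j(i,t)}\big)+\lambda_i\,u_i^0,$$ with stubbornness $\lambda_i\in(0,1]$. Then the induced user partition $\mathcal F^t_1,\dots,\mathcal F^t_M$, where $\mathcal F^t_j=\{i: j(i,t)=j\}$, is static (i.e. $\mathcal F^t_j=\mathcal F^0_j$ for all $t$ and $j$), and each user's opinion converges to a steady state $u_i^*\in\mathbb R^n$. Moreover, for every user $i\in\mathcal F_j$, the distance $\|u_i^t-c_j\|_2$ decreases monotonically in time, i.e. $\|u_i^{t+1}-c_j\|_2\le\|u_i^t-c_j\|_2$ for all $t\ge0$.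
   Context: This is the multi-topic Friedkin–Johnsen user–creator dynamics specialized to a diagonal social influence matrix $A$ (no user–user interaction) and fully stubborn creators. In the general model, $u^{t+1}_i=(1-\lambda_i)\big(\sum_k A_{ik}u_k^t+\sum_j B^t_{ij}c_j^t\big)+\lambda_i u_i^0$ where $B^t_{ij}\neq0$ only for the creator $j$ consumed by user $i$ at time $t$ and $\sum_kA_{ik}+\sum_jB^t_{ij}=1$; with $A$ diagonal this gives $B^t_{i,j(i,t)}=1-A_{ii}$. The greedy recommender gives each user the single creator closest (in Euclidean norm) to the user's current opinion; ties in the argmin are broken by a fixed deterministic rule (e.g. smallest index). *)

(* Defs.v *)
From HB Require Import structures.
From mathcomp Require Import all_boot all_order all_algebra.
From mathcomp Require Import all_classical all_reals all_analysis.
Set Implicit Arguments. Unset Strict Implicit. Unset Printing Implicit Defensive.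
Import Order.TTheory GRing.Theory Num.Theory.
Local Open Scope ring_scope.

Definition norm2 {R : realType} {n : nat} (x : 'rV[R]_n) : R :=
  Num.sqrt (\sum_(k < n) x ord0 k ^+ 2).

Definition in_cube {R : realType} {n : nat} (x : 'rV[R]_n) : Prop :=
  forall k, -1 <= x ord0 k <= 1.

(* Greedy recommendation with smallest-index tie-breaking:
   j is the smallest index in argmin_j' ||c_j' - x||_2. *)
Definition greedy_choice {R : realType} {n M : nat}
  (c : 'I_M -> 'rV[R]_n) (x : 'rV[R]_n) (j : 'I_M) : Prop :=
  (forall j', norm2 (c j - x) <= norm2 (c j' - x)) /\
  (forall j', norm2 (c j' - x) <= norm2 (c j - x) -> (j <= j')%N).

Definition user_part {N M : nat} (jsel : nat -> 'I_N -> 'I_M) (t : nat) (j : 'I_M)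
  : {set 'I_N} := [set i | jsel t i == j].

(* Main.v *)
Require Import Defs.
From HB Require Import structures.
From mathcomp Require Import all_boot all_order all_algebra.
From mathcomp Require Import all_classical all_reals all_analysis.
From mathcomp Require Import ring lra.
Import Order.TTheory GRing.Theory Num.Theory.
Import numFieldNormedType.Exports.
Local Open Scope classical_set_scope.
Local Open Scope ring_scope.

Definition sq {R : realType} {n : nat} (x : 'rV[R]_n) : R :=
  \sum_(k < n) x ord0 k ^+ 2.

Lemma sq_ge0 {R : realType} {n : nat} (x : 'rV[R]_n) : 0 <= sq x.
Proof. by apply: sumr_ge0 => k _; apply: sqr_ge0. Qed.

Lemma norm2_le {R : realType} {n : nat} (x y : 'rV[R]_n) :
  (norm2 x <= norm2 y) = (sq x <= sq y).
Proof. by rewrite /norm2 ler_sqrt // sq_ge0. Qed.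

Lemma D_lin {R : realType} {n : nat} (cj cj' x0 : 'rV[R]_n) (s : R) :
  sq (cj' - (cj + s *: (x0 - cj))) - sq (cj - (cj + s *: (x0 - cj))) =
  (1 - s) * sq (cj' - cj) + s * (sq (cj' - x0) - sq (cj - x0)).
Proof.
rewrite /sq -!sumrB !mulr_sumr -big_split; apply: eq_bigr => k _.
rewrite !mxE /=; ring.
Qed.

Lemma greedy_pres {R : realType} {n M : nat} (c : 'I_M -> 'rV[R]_n)
  (x0 : 'rV[R]_n) (j : 'I_M) (s : R) :
  0 < s <= 1 -> greedy_choice c x0 j ->
  greedy_choice c (c j + s *: (x0 - c j)) j.
Proof.
move=> /andP[s0 s1] [g1 g2]; split.
- move=> j'; rewrite norm2_le -subr_ge0 D_lin.
  have := g1 j'; rewrite norm2_le -subr_ge0 => h.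
  have := sq_ge0 (c j' - c j) => h2.
  apply: addr_ge0; [apply: mulr_ge0 => //; lra | exact: mulr_ge0 (ltW s0) h].
- move=> j' h; apply: g2; move: h; rewrite !norm2_le => h.
  have e := D_lin (c j) (c j') x0 s.
  have h2 := sq_ge0 (c j' - c j).
  have := g1 j'; rewrite norm2_le => h3.
  have h4 : 0 <= (1 - s) * sq (c j' - c j) by apply: mulr_ge0 => //; lra.
  have h5 : s * (sq (c j' - x0) - sq (c j - x0)) <= 0 by lra.
  have : sq (c j' - x0) - sq (c j - x0) <= 0 by rewrite -(pmulr_rle0 _ s0).
  lra.
Qed.

Lemma greedy_uniq {R : realType} {n M : nat} (c : 'I_M -> 'rV[R]_n)
  (x : 'rV[R]_n) (j1 j2 : 'I_M) :
  greedy_choice c x j1 -> greedy_choice c x j2 -> j1 = j2.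
Proof.
move=> [a1 b1] [a2 b2]; apply: val_inj; apply/eqP; rewrite eqn_leq.
by rewrite (b1 _ (a2 j1)) (b2 _ (a1 j2)).
Qed.

Lemma sq_scale {R : realType} {n : nat} (cj w : 'rV[R]_n) (s : R) :
  sq (cj + s *: w - cj) = s ^+ 2 * sq w.
Proof. rewrite /sq mulr_sumr; apply: eq_bigr => k _; rewrite !mxE; ring. Qed.

Theorem lemma1 (R : realType) (n N M : nat) (hn : (0 < n)%N) (hN : (0 < N)%N)
  (hM : (0 < M)%N)
  (a : 'I_N -> R) (lam : 'I_N -> R)
  (c : 'I_M -> 'rV[R]_n)
  (u : nat -> 'I_N -> 'rV[R]_n) (jsel : nat -> 'I_N -> 'I_M)
  (ha : forall i, 0 < a i <= 1)
  (hlam : forall i, 0 < lam i <= 1)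
  (hc : forall j, in_cube (c j))
  (hu0 : forall i, in_cube (u 0%N i))
  (hsel : forall t i, greedy_choice c (u t i) (jsel t i))
  (hdyn : forall t i,
     u t.+1 i = (1 - lam i) *: (a i *: u t i + (1 - a i) *: c (jsel t i))
                + lam i *: u 0%N i) :
  (forall t j, user_part jsel t j = user_part jsel 0%N j) /\
  (forall i, exists ustar : 'rV[R]_n, (fun t => u t i) @ \oo --> ustar) /\
  (forall j i, i \in user_part jsel 0%N j ->
     forall t, norm2 (u t.+1 i - c j) <= norm2 (u t i - c j)).
Proof.
have key : forall i, exists (s : nat -> R) (ss : R),
  [/\ forall t, jsel t i = jsel 0%N i /\
        u t i = c (jsel 0%N i) + s t *: (u 0%N i - c (jsel 0%N i)),
      forall t, s t.+1 <= s t,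
      forall t, 0 <= s t &
      s t @[t --> \oo] --> ss].
  move=> i.
  have /andP[a0 a1] := ha i; have /andP[l0 l1] := hlam i.
  pose al := (1 - lam i) * a i.
  have al0 : 0 <= al by rewrite /al; apply: mulr_ge0; lra.
  have al1 : al <= 1 - lam i by rewrite /al; rewrite ler_piMr //; lra.
  have al1' : al < 1 by lra.
  have hden : 1 - al != 0 by rewrite subr_eq0 gt_eqF.
  pose ss := lam i / (1 - al).
  have hss : ss * (1 - al) = lam i by rewrite /ss divfK.
  have ss0 : 0 < ss by rewrite /ss divr_gt0 //; lra.
  have ss1 : ss <= 1 by rewrite /ss ler_pdivrMr; lra.
  pose s t := ss + al ^+ t * (1 - ss).
  have hs : forall t, s t.+1 = al * s t + lam i.
    by move=> t; rewrite /s exprS -hss; ring.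
  have sbnd : forall t, 0 < s t <= 1.
    move=> t; have p0 := exprn_ge0 t al0; have p1 := exprn_ile1 t al0 (ltW al1').
    rewrite /s; apply/andP; split; first nra. nra.
  exists s, ss; split.
  - elim=> [|t [IHj IHu]].
      split=> //; apply/matrixP => p q; rewrite !mxE /s expr0; ring.
    have ej : jsel t.+1 i = jsel 0%N i.
      have /greedy_uniq := hsel t.+1 i; apply.
      rewrite hdyn IHj IHu.
      have -> : (1 - lam i) *: (a i *: (c (jsel 0%N i) + s t *: (u 0%N i - c (jsel 0%N i))) +
          (1 - a i) *: c (jsel 0%N i)) + lam i *: u 0%N i =
          c (jsel 0%N i) + s t.+1 *: (u 0%N i - c (jsel 0%N i)).
        apply/matrixP => p q; rewrite hs /al !mxE; ring.
      exact: greedy_pres (sbnd _) (hsel 0%N i).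
    split=> //; rewrite hdyn IHj IHu.
    apply/matrixP => p q; rewrite hs /al !mxE; ring.
  - move=> t; rewrite /s exprS; have p0 := exprn_ge0 t al0.
    have : 0 <= (1 - al) * (al ^+ t * (1 - ss)).
      by apply: mulr_ge0; [lra| apply: mulr_ge0 => //; lra].
    lra.
  - by move=> t; have /andP[/ltW] := sbnd t.
  - have -> : ss = ss + 0 * (1 - ss) by rewrite mul0r addr0.
    apply: cvgD; first exact: cvg_cst.
    apply: cvgMl; apply: cvg_expr; rewrite ger0_norm //.
split.
  move=> t j; apply/setP => i; rewrite !inE.
  have [s [ss [h _ _ _]]] := key i; by rewrite (proj1 (h t)).
split.
  move=> i; have [s [ss [h _ _ hc']]] := key i.
  exists (c (jsel 0%N i) + ss *: (u 0%N i - c (jsel 0%N i))).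
  have -> : (fun t => u t i) = (fun t => c (jsel 0%N i) + s t *: (u 0%N i - c (jsel 0%N i))).
    by apply: funext => t; rewrite (proj2 (h t)).
  apply: cvgD; first exact: cvg_cst.
  exact: cvgZr_tmp.
move=> j i; rewrite inE => /eqP <- t.
have [s [ss [h hm hp _]]] := key i.
rewrite (proj2 (h t)) (proj2 (h t.+1)) norm2_le !sq_scale.
apply: ler_wpM2r; first exact: sq_ge0.
have := hm t; have := hp t.+1; move=> *; nra.
Qed.
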